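(* Let $d\geq 3$ and $k\geq 1$, and let $P_{d,k}(t)=\sum_{n\geq 1}p_{d,k,n}t^n$, where $p_{d,k,n}$ is the number of directed plateau polyhypercubes of dimension $d$, width $k$ and lateral area $n$. Then $$P_{d,k}(t)=\frac{t^{k(d-1)}}{(1-t)^{2k(d-1)-(d-1)}}.$$
   Context: Work in $\mathbb{Z}^d$ with orthonormal coordinate system $(0,\vec{i_1},\dots,\vec{i_d})$; a cell is a unit hypercube of the lattice. A polyhypercube of dimension $d$ is a finite union of cells, connected through their $(d-1)$-dimensional faces, defined up to translation. Its width is the number of distinct values of the $\vec{i_1}$-coordinate taken by its cells; its strata are its intersections with the layers of constant $\vec{i_1}$-coordinate. A plateau is a stratum that is a hyperrectangle. An elementary step is a positive move of one unit along one axis. A polyhypercube is directed if every cell can be reached from a distinguished root cell by a path of cells of the polyhypercube using only elementary steps. A directed plateau polyhypercube is a directed polyhypercube all of whose strata are plateaus. The lateral area of a polyhypercube is the sum, over $2\leq l\leq d$, of the areas (numbers of unit squares) of the polyominoes obtained by projecting it onto the planes $(\vec{i_1},\vec{i_l})$. Generating functions are formal power series in $t$. *)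

(* Defs.v *)
From HB Require Import structures.
From mathcomp Require Import all_boot all_order all_algebra.
From mathcomp Require Import finmap.
Set Implicit Arguments. Unset Strict Implicit. Unset Printing Implicit Defensive.
Import Order.TTheory GRing.Theory Num.Theory.
Local Open Scope ring_scope.


(* A cell of Z^d is identified with the lattice point of its lower corner.
   We split Z^d = Z x Z^(d-1): the first component is the i_1 coordinate,
   the second gives the coordinates along i_2, ..., i_d. *)
Definition cell (d : nat) := (int * {ffun 'I_d.-1 -> int})%type.

Definition estep (d : nat) (a b : cell d) : bool :=
  (((fst b) == (fst a) + 1) && ((snd b) == (snd a)))
  || (((fst b) == (fst a)) &&
      [exists i, ((snd b) i == (snd a) i + 1) && [forall j, (j != i) ==> ((snd b) j == (snd a) j)]]).

Definition adjacent (d : nat) (a b : cell d) : bool := estep a b || estep b a.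

Definition reach (d : nat) (R : rel (cell d)) (A : {fset cell d}) (x y : cell d) : Prop :=
  x \in A /\ exists s : seq (cell d),
    [/\ path R x s, all (fun z => z \in A) s & last x s = y].

Definition polyhypercube (d : nat) (A : {fset cell d}) : Prop :=
  (exists c, c \in A) /\ forall a b, a \in A -> b \in A -> reach (@adjacent d) A a b.

Definition directed (d : nat) (A : {fset cell d}) : Prop :=
  exists2 r, r \in A & forall a, a \in A -> reach (@estep d) A r a.

Definition all_plateaus (d : nat) (A : {fset cell d}) : Prop :=
  forall c, c \in A -> exists lo hi : {ffun 'I_d.-1 -> int},
    forall y : {ffun 'I_d.-1 -> int},
      ((fst c, y) \in A) = [forall i, (lo i <= y i) && (y i <= hi i)].

Local Open Scope fset_scope.
Definition width (d : nat) (A : {fset cell d}) : nat := #|` [fset (fst c) | c : cell d in A] |.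

Definition lateral_area (d : nat) (A : {fset cell d}) : nat :=
  (\sum_(l < d.-1) #|` [fset ((fst c), (snd c) l) | c : cell d in A] |)%N.

Local Close Scope fset_scope.
(* Polyhypercubes are considered up to translation; each translation class is
   represented by its unique member whose minimum along every axis is 0. *)
Definition normalized (d : nat) (A : {fset cell d}) : Prop :=
  (forall c, c \in A -> 0 <= (fst c) /\ forall i, 0 <= (snd c) i)
  /\ (exists2 c, c \in A & (fst c) = 0)
  /\ (forall i, exists2 c, c \in A & (snd c) i = 0).

Definition dpp (d k n : nat) (A : {fset cell d}) : Prop :=
  [/\ normalized A, polyhypercube A, directed A, all_plateaus A
      & width A = k /\ lateral_area A = n].

Definition counts (d k : nat) (p : nat -> nat) : Prop :=
  forall n, exists s : seq {fset cell d},
    [/\ uniq s, forall A, A \in s <-> @dpp d k n A & size s = p n].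

(* Coefficientwise identity  (sum_n p n t^n) * (1 - t)^m = t^a  of formal
   power series in t, i.e. sum_n p n t^n = t^a / (1 - t)^m. *)
Definition gf_eq (p : nat -> nat) (a m : nat) : Prop :=
  forall n : nat,
    \sum_(j < n.+1) ((-1) ^+ j * ('C(m, j))%:Z * (p (n - j)%N)%:Z : int)
    = ((n == a) : nat)%:Z.

(* Main.v *)
Require Import Defs.
From HB Require Import structures.
From mathcomp Require Import all_boot all_order all_algebra finmap zify ring lra.
Set Implicit Arguments. Unset Strict Implicit. Unset Printing Implicit Defensive.
Import Order.TTheory GRing.Theory Num.Theory.

Section part_AC.
Fixpoint comps (m N : nat) : seq (seq nat) :=
  match m with
  | 0 => if N == 0%N then [:: [::]] else [::]
  | m'.+1 => [seq i :: t | i <- iota 0 N.+1, t <- comps m' (N - i)]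
  end.
Lemma comps_mem m N t : (t \in comps m N) = (size t == m) && (sumn t == N).
Proof.
elim: m N t => [|m IH] N t.
  rewrite /=; case: t => [|x t] /=; case: N => [|N] //=; rewrite ?andbT ?andbF //.

apply/idP/idP.
  case/allpairsPdep => i [t' [hi ht' ->]] /=.
  rewrite IH in ht'; case/andP: ht' => /eqP -> /eqP ->.
  rewrite mem_iota in hi; rewrite eqxx /=; apply/eqP; lia.
case: t => [|x t] //=; rewrite eqSS => /andP [/eqP hs /eqP hN].
change (x :: t \in [seq i :: t | i <- iota 0 N.+1, t <- comps m (N - i)]).
apply/allpairsPdep; exists x, t; split => //.
  rewrite mem_iota; lia.
rewrite IH hs eqxx /=; apply/eqP; lia.
Qed.

Lemma comps_uniq m N : uniq (comps m N).
Proof.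
elim: m N => [|m IH] N; first by rewrite /=; case: ifP.
apply: allpairs_uniq_dep => //; first exact: iota_uniq.
by move=> [i t] [j u] _ _ /= [-> ->].
Qed.

Definition q m N := size (comps m N).

Lemma q0 N : q 0 N = (N == 0%N).
Proof. by rewrite /q /=; case: N. Qed.

Lemma qS m N : q m.+1 N = \sum_(0 <= i < N.+1) q m (N - i).
Proof. by rewrite /q size_allpairs_dep sumnE big_map. Qed.

Lemma q_S0 m : q m.+1 0 = q m 0.
Proof. by rewrite qS big_nat1. Qed.

Lemma q_SS m N : q m.+1 N.+1 = (q m.+1 N + q m N.+1)%N.
Proof.
rewrite !qS big_nat_recl // subn0 addnC; congr (_ + _)%N.
Qed.

Local Open Scope ring_scope.

Definition S m (f : nat -> int) n : int :=
  \sum_(j < n.+1) ((-1) ^+ j * ('C(m, j))%:Z * f (n - j)%N).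

Lemma S0 f n : S 0 f n = f n.
Proof.
rewrite /S big_ord_recl /= bin0 expr0 mul1r mul1r subn0.
rewrite big1 ?addr0 // => i _; by rewrite bin0n /= mulr0 mul0r.
Qed.

Lemma S_succ0 m f : S m.+1 f 0 = S m f 0.
Proof. by rewrite /S !big_ord1 /= !bin0. Qed.

Lemma S_succS m f n : S m.+1 f n.+1 = S m f n.+1 - S m f n.
Proof.
rewrite /S big_ord_recl [in X in _ = X - _]big_ord_recl /= !bin0.
rewrite -addrA; congr (_ + _).
rewrite -sumrB; apply: eq_bigr => i _ /=.
rewrite binS PoszD subSS /bump /= add1n exprS; ring.
Qed.

Lemma S_q m r N : S m (fun i => (q (m + r) i)%:Z) N = (q r N)%:Z.
Proof.
elim: m r N => [|m IH] r N; first by rewrite S0.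
case: N => [|N].
  by rewrite S_succ0 addSnnS IH q_S0.
rewrite S_succS addSnnS !IH q_SS PoszD; ring.
Qed.

Definition pf a m n : nat := if (a <= n)%N then q m (n - a) else 0%N.

Lemma gf_pf a m : gf_eq (pf a m) a m.
Proof.
move=> n; change (S m (fun i => (pf a m i)%:Z) n = ((n == a) : nat)%:Z).
case: (leqP a n) => han.
  have -> : S m (fun i => (pf a m i)%:Z) n = S m (fun i => (q m i)%:Z) (n - a).
    rewrite /S -(big_mkord xpredT (fun j => (-1) ^+ j * ('C(m, j))%:Z * (pf a m (n - j))%:Z)).
    rewrite -(big_mkord xpredT (fun j => (-1) ^+ j * ('C(m, j))%:Z * (q m (n - a - j))%:Z)).
    rewrite (big_cat_nat _ (n:=(n-a).+1)) //=; last by lia.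
    rewrite [X in _ + X]big_nat_cond [X in _ + X]big1 ?addr0.
      apply: eq_big_nat => i /andP [_ hi]; rewrite /pf.
      have -> : (a <= n - i)%N by lia.
      congr (_ * _%:Z); congr (q m _); lia.
    move=> i /andP [/andP [hi1 hi2] _]; rewrite /pf.
    have -> : (a <= n - i)%N = false by lia.
    by rewrite mulr0.
  have := S_q m 0 (n - a); rewrite addn0 => ->; rewrite q0.
  by congr Posz; apply/eqP/idP; lia.
rewrite /S big1.
  have -> : (n == a) = false by apply/eqP; lia.
  by [].
move=> i _; rewrite /pf.
have -> : (a <= n - i)%N = false by lia.
by rewrite mulr0.
Qed.

End part_AC.

Section part_G1.
Local Open Scope ring_scope.

Section Reach.
Variables (d : nat) (R : rel (cell d)) (A : {fset cell d}).

Lemma reach_refl x : x \in A -> reach R A x x.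
Proof. by move=> hx; split => //; exists [::]. Qed.

Lemma reach_trans x y z : reach R A x y -> reach R A y z -> reach R A x z.
Proof.
move=> [hx [s [p1 a1 l1]]] [hy [t [p2 a2 l2]]]; split => //; exists (s ++ t).
by rewrite cat_path all_cat last_cat l1 p1 p2 a1 a2.
Qed.

Lemma reach_step x y : x \in A -> y \in A -> R x y -> reach R A x y.
Proof. by move=> hx hy hr; split => //; exists [:: y]; rewrite /= hr hy. Qed.

Lemma reach_memr x y : reach R A x y -> y \in A.
Proof.
move=> [hx [s [_ al <-]]]; case: s al => [|z s] //= /andP [hz hs].
have : last z s \in z :: s by exact: mem_last.
by rewrite inE => /orP [/eqP -> | h] //; apply: (allP hs).
Qed.

Lemma reach_sym x y : symmetric R -> reach R A x y -> reach R A y x.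
Proof.
move=> sR [hx [s [p al l]]]; elim: s x hx p al l => [|z s IH] x hx /=.
  by move=> _ _ <-; exact: reach_refl.
move=> /andP [hxz p] /andP [hz al] l.
apply: reach_trans (IH z hz p al l) _.
by apply: reach_step => //; rewrite sR.
Qed.

End Reach.

Lemma reach_sub d (R R' : rel (cell d)) A x y :
  subrel R R' -> reach R A x y -> reach R' A x y.
Proof.
move=> sub [hx [s [p al l]]]; split => //; exists s; split => //.
exact: sub_path p.
Qed.

Lemma adjacent_sym d : symmetric (@adjacent d).
Proof. by move=> a b; rewrite /adjacent orbC. Qed.

Lemma directed_poly d (A : {fset cell d}) : directed A -> polyhypercube A.
Proof.
move=> [r hr hd]; split; first by exists r.
move=> a b ha hb.
have h1 := reach_sub (fun x y (h : estep x y) => (introT orP (or_introl h) : adjacent x y)) (hd a ha).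
have h2 := reach_sub (fun x y (h : estep x y) => (introT orP (or_introl h) : adjacent x y)) (hd b hb).
exact: reach_trans (reach_sym (@adjacent_sym d) h1) h2.
Qed.

End part_G1.

Section part_G2.
Local Open Scope ring_scope.

Definition cle d (a b : cell d) := a.1 <= b.1 /\ forall i, a.2 i <= b.2 i.

Lemma cle_trans d (a b c : cell d) : cle a b -> cle b c -> cle a c.
Proof.
move=> [h1 h2] [h3 h4]; split; first exact: le_trans h1 h3.
by move=> i; exact: le_trans (h2 i) (h4 i).
Qed.

Lemma estep_le d (a b : cell d) : estep a b -> cle a b.
Proof.
case/orP => [/andP [/eqP h1 /eqP h2] | /andP [/eqP h1 /existsP [i /andP [/eqP hi /forallP hj]]]].
  by split; [rewrite h1; lia | move=> i; rewrite h2].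
split; first by rewrite h1.
move=> j; case: (eqVneq j i) => [-> | hji]; first by rewrite hi; lia.
by have := hj j; rewrite hji /= => /eqP ->.
Qed.

Lemma path_le d (x : cell d) s : path (@estep d) x s -> cle x (last x s).
Proof.
elim: s x => [|z s IH] x /=; first by move=> _; split => // i.
by move=> /andP [h p]; exact: cle_trans (estep_le h) (IH z p).
Qed.

Lemma reach_le d (A : {fset cell d}) x y : reach (@estep d) A x y -> cle x y.
Proof. by move=> [_ [s [p _ <-]]]; exact: path_le. Qed.

Lemma reach_entry d (A : {fset cell d}) r b : reach (@estep d) A r b -> b.1 != r.1 ->
  exists y' : {ffun 'I_d.-1 -> int}, (forall i, y' i <= b.2 i) /\ (b.1 - 1, y') \in A /\ (b.1, y') \in A.
Proof.
move=> [hr [s [p al l]]]; elim: s r hr p al l => [|z s IH] r hr /=.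
  by move=> _ _ <-; rewrite eqxx.
move=> /andP [hrz p] /andP [hz al] l hb.
case: (eqVneq z.1 b.1) => hzb; last by apply: (IH z hz p al l); rewrite eq_sym.
have hrz1 : z.1 != r.1 by rewrite hzb.
move: hrz; rewrite /estep (negbTE hrz1) /= orbF => /andP [/eqP e1 /eqP e2].
exists z.2; split.
  by move=> i; have [_ ] := path_le p; rewrite l; apply.
split; last by rewrite -hzb; move: hz; case: (z).
have -> : (b.1 - 1, z.2) = r by rewrite -hzb e1 e2 addrK; case: (r).
exact: hr.
Qed.

Lemma box_reach d (A : {fset cell d}) x (y1 y2 : {ffun 'I_d.-1 -> int}) :
  (forall y : {ffun 'I_d.-1 -> int}, (forall i, y1 i <= y i <= y2 i) -> (x, y) \in A) ->
  (forall i, y1 i <= y2 i) -> reach (@estep d) A (x, y1) (x, y2).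
Proof.
move=> hbox.
suff H : forall n (y : {ffun 'I_d.-1 -> int}), (\sum_i `|y2 i - y i| <= n)%N ->
   (forall i, y1 i <= y i <= y2 i) -> reach (@estep d) A (x, y) (x, y2).
  by move=> h; apply: (H _ _ (leqnn _)) => i; rewrite lexx h.
elim=> [|n IH] y hn hy.
  have <- : y = y2.
    apply/ffunP => i; move: hn; rewrite leqn0 sum_nat_eq0 => /forallP /(_ i) /=.
    by rewrite absz_eq0 subr_eq0 => /eqP.
  by apply: reach_refl; apply: hbox.
case: (boolP [exists i, y i < y2 i]) => [/existsP [i hi] | hno]; last first.
  have <- : y = y2.
    apply/ffunP => j; move: hno; rewrite negb_exists => /forallP /(_ j).
    have /andP [_ h2] := hy j; rewrite -leNgt => h3; apply/eqP; rewrite eq_le h2 h3.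
    by [].
  by apply: reach_refl; apply: hbox.
pose y' := [ffun j => if j == i then y j + 1 else y j].
have hy' : forall j, y1 j <= y' j <= y2 j.
  move=> j; rewrite /y' ffunE; case: (eqVneq j i) => [-> | _]; last exact: hy.
  have /andP [h1 h2] := hy i; apply/andP; split; lia.
apply: reach_trans (IH y' _ hy').
  apply: reach_step; [exact: hbox | exact: hbox |].
  apply/orP; right; rewrite eqxx /=; apply/existsP; exists i.
  rewrite /y' ffunE eqxx eqxx /=; apply/forallP => j; apply/implyP => hj.
  by rewrite ffunE (negbTE hj).
rewrite -ltnS; apply: leq_trans hn.
rewrite (bigD1 i) //= [X in (_ < X)%N](bigD1 i) //=.
have -> : \sum_(j | j != i) `|y2 j - y' j|%N = \sum_(j | j != i) `|y2 j - y j|%N.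
  by apply: eq_bigr => j hj; rewrite /y' ffunE (negbTE hj).
rewrite /y' ffunE eqxx ltn_add2r.
have /andP [h1 h2] := hy i.
lia.
Qed.

End part_G2.

Section part_G3.
Local Open Scope ring_scope.

Definition wk k := (k.*2).-1.
Definition G k (s : seq nat) (l j : nat) : nat := nth 0%N s (l * wk k + j).
Definition LO k s x l : nat := (\sum_(j < x) G k s l j.*2)%N.
Definition HI k s x l : nat :=
  (LO k s x l + G k s l x.*2 + (if x.+1 < k then G k s l x.*2.+1 else 0))%N.

Definition inA d k s (c : cell d) : bool :=
  [&& (0 <= c.1), (`|c.1| < k)%N &
   [forall i : 'I_d.-1, ((LO k s `|c.1| i)%:Z <= c.2 i) && (c.2 i <= (HI k s `|c.1| i)%:Z)]].

Definition Bd d k s : nat := (\sum_(l < d.-1) \sum_(x < k) HI k s x l)%N.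

Definition mkc d k B (p : 'I_k * {ffun 'I_d.-1 -> 'I_B.+1}) : cell d :=
  (Posz p.1, [ffun i => Posz (p.2 i)]).

Definition enc d k s : {fset cell d} :=
  [fset c in [seq c <- map (@mkc d k (Bd d k s)) (enum {: 'I_k * {ffun 'I_d.-1 -> 'I_(Bd d k s).+1}}) | inA k s c]]%fset.

Lemma leq_sum1 (I : finType) (F : I -> nat) i : (F i <= \sum_j F j)%N.
Proof. by rewrite (bigD1 i) //= leq_addr. Qed.

Lemma HI_le_B d k s x (l : 'I_d.-1) : (x < k)%N -> (HI k s x l <= Bd d k s)%N.
Proof.
move=> hx; apply: leq_trans (leq_sum1 (fun l : 'I_d.-1 => \sum_(x < k) HI k s x l) l).
exact: (leq_sum1 (fun x : 'I_k => HI k s x l) (Ordinal hx)).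
Qed.

Lemma enc_mem d k s c : (c \in enc d k s) = inA k s c.
Proof.
rewrite /enc in_fset /= mem_filter.
case h: (inA k s c) => //=.
move: (h); rewrite /inA => /and3P [h0 hk /forallP hb].
apply/mapP; exists (Ordinal hk, [ffun i => inord `|c.2 i|]); first by rewrite mem_enum.
rewrite /mkc /=; case: c h0 hk hb h => [c1 c2] /= h0 hk hb _.
congr pair; first by rewrite gez0_abs.
apply/ffunP => i; rewrite !ffunE.
have /andP [h1 h2] := hb i.
have hc : 0 <= c2 i by apply: le_trans h1.
rewrite inordK ?gez0_abs //.
rewrite ltnS -lez_nat gez0_abs //; apply: le_trans h2 _.
by rewrite lez_nat; apply: HI_le_B.
Qed.

End part_G3.

Section part_G4.
Local Open Scope ring_scope.

Definition LOf d k s x : {ffun 'I_d.-1 -> int} := [ffun i : 'I_d.-1 => (LO k s x i)%:Z].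
Definition HIf d k s x : {ffun 'I_d.-1 -> int} := [ffun i : 'I_d.-1 => (HI k s x i)%:Z].

Lemma inA_col d k s x (y : {ffun 'I_d.-1 -> int}) : (x < k)%N ->
  inA k s (Posz x, y) = [forall i : 'I_d.-1, ((LO k s x i)%:Z <= y i) && (y i <= (HI k s x i)%:Z)].
Proof. by move=> hx; rewrite /inA /= hx. Qed.

Lemma LO_S k s x l : LO k s x.+1 l = (LO k s x l + G k s l x.*2)%N.
Proof. by rewrite /LO big_ord_recr. Qed.

Lemma LO_le_HI k s x l : (LO k s x l <= HI k s x l)%N.
Proof. by rewrite /HI -addnA leq_addr. Qed.

Lemma LOS_le_HI k s x l : (x.+1 < k)%N -> (LO k s x.+1 l <= HI k s x l)%N.
Proof. by move=> h; rewrite LO_S /HI h leq_addr. Qed.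

Lemma LO0 k s l : LO k s 0 l = 0%N.
Proof. by rewrite /LO big_ord0. Qed.

Lemma enc_directed d k s : (0 < k)%N -> directed (enc d k s).
Proof.
move=> hk.
have hcol : forall x, (x < k)%N -> reach (@estep d) (enc d k s) (0, LOf d k s 0) (Posz x, LOf d k s x).
  elim=> [|x IH] hx.
    apply: reach_refl; rewrite enc_mem inA_col //; apply/forallP => i.
    by rewrite /LOf ffunE lexx /= lez_nat LO_le_HI.
  have hx' : (x < k)%N by lia.
  apply: reach_trans (IH hx') _.
  apply: reach_trans (_ : reach _ _ _ (Posz x, LOf d k s x.+1)) _.
    apply: box_reach.
      move=> y hy; rewrite enc_mem inA_col //; apply/forallP => i.
      have /andP [h1 h2] := hy i; move: h1 h2; rewrite /LOf !ffunE => h1 h2.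
      rewrite h1 /=; apply: le_trans h2 _; rewrite lez_nat; exact: LOS_le_HI.
    by move=> i; rewrite /LOf !ffunE lez_nat LO_S leq_addr.
  apply: reach_step.
  - rewrite enc_mem inA_col //; apply/forallP => i.
    rewrite /LOf ffunE lez_nat LO_S leq_addr /= -LO_S lez_nat; exact: LOS_le_HI.
  - rewrite enc_mem inA_col //; apply/forallP => i.
    by rewrite /LOf ffunE lexx /= lez_nat LO_le_HI.
  - by apply/orP; left; apply/andP; split; apply/eqP => //=; rewrite -addn1 PoszD.
exists (0, LOf d k s 0).
  rewrite enc_mem inA_col //; apply/forallP => i.
  by rewrite /LOf ffunE lexx /= lez_nat LO_le_HI.
move=> [c1 c2]; rewrite enc_mem /inA /= => /and3P [h0 hx /forallP hb].
apply: reach_trans (hcol _ hx) _.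
have -> : c1 = Posz `|c1| by rewrite gez0_abs.
apply: box_reach.
  move=> y hy; rewrite enc_mem inA_col //; apply/forallP => i.
  have /andP [h1 h2] := hy i; have /andP [h3 h4] := hb i.
  move: h1; rewrite /LOf ffunE => h1.
  by rewrite h1 /=; apply: le_trans h2 h4.
by move=> i; have /andP [h3 h4] := hb i; rewrite /LOf ffunE.
Qed.

Lemma enc_plateau d k s : all_plateaus (enc d k s).
Proof.
move=> [c1 c2]; rewrite enc_mem /inA /= => /and3P [h0 hx _].
exists (LOf d k s `|c1|), (HIf d k s `|c1|) => y.
rewrite enc_mem /inA /= h0 hx /=; apply: eq_forallb => i.
by rewrite /LOf /HIf !ffunE.
Qed.

Lemma enc_normalized d k s : (0 < k)%N -> normalized (enc d k s).
Proof.
move=> hk.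
have hr : (0, LOf d k s 0) \in enc d k s.
  rewrite enc_mem inA_col //; apply/forallP => i.
  by rewrite /LOf ffunE lexx /= lez_nat LO_le_HI.
split; last split.
- move=> [c1 c2]; rewrite enc_mem /inA /= => /and3P [h0 hx /forallP hb].
  split => // i; have /andP [h1 _] := hb i; exact: le_trans h1.
- by exists (0, LOf d k s 0).
- move=> i; exists (0, LOf d k s 0) => //.
  by rewrite /LOf ffunE LO0.
Qed.

End part_G4.

Section part_G5.
Local Open Scope ring_scope.

Lemma enc_width d k s : width (enc d k s) = k.
Proof.
rewrite /width.
have -> : [fset c.1 | c : cell d in enc d k s]%fset = [fset z in map Posz (iota 0 k)]%fset.
  apply/fsetP => z; rewrite in_fset; apply/imfsetP/mapP.
  - move=> [c hc ->]; move: hc; rewrite /= enc_mem /inA => /and3P [h0 hx _].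
    by exists `|c.1|%N; rewrite ?mem_iota ?gez0_abs.
  - move=> [x hx ->]; exists (Posz x, LOf d k s x) => //=.
    move: hx; rewrite mem_iota add0n => hx.
    rewrite enc_mem inA_col //; apply/forallP => i.
    by rewrite /LOf ffunE lexx /= lez_nat LO_le_HI.
rewrite card_fseq undup_id ?size_map ?size_iota //.
by rewrite map_inj_uniq ?iota_uniq // => ? ? [].
Qed.

Lemma enc_area_l d k s (l : 'I_d.-1) :
  #|` [fset (c.1, c.2 l) | c : cell d in enc d k s] |%fset =
  (\sum_(x < k) (HI k s x l - LO k s x l).+1)%N.
Proof.
set L := [seq (Posz x, Posz (LO k s x l + j)) | x <- iota 0 k, j <- iota 0 (HI k s x l - LO k s x l).+1].
have -> : [fset (c.1, c.2 l) | c : cell d in enc d k s]%fset = [fset z in L]%fset.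
  apply/fsetP => z; rewrite in_fset; apply/imfsetP/allpairsPdep.
  - move=> [[c1 c2] hc ->]; move: hc; rewrite /= enc_mem /inA /= => /and3P [h0 hx /forallP hb].
    have /andP [h1 h2] := hb l.
    exists `|c1|%N, (`|c2 l| - LO k s `|c1| l)%N; split.
    + by rewrite mem_iota.
    + have hh : (`|c2 l| <= HI k s `|c1| l)%N.
        by rewrite -lez_nat gez0_abs //; apply: le_trans h1.
      rewrite inE mem_iota; lia.
    + have hc2 : 0 <= c2 l by apply: le_trans h1.
      rewrite gez0_abs // subnKC ?gez0_abs //.
      by rewrite -lez_nat gez0_abs.
  - move=> [x [j [hx hj ->]]].
    move: hx hj; rewrite !mem_iota !add0n ltnS => hx hj.
    exists (Posz x, [ffun i : 'I_d.-1 => if i == l then Posz (LO k s x l + j) else (LO k s x i)%:Z]); last first.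
      by rewrite /= ffunE eqxx.
    rewrite /= enc_mem inA_col //; apply/forallP => i; rewrite ffunE.
    case: (eqVneq i l) => [-> | _].
      rewrite !lez_nat leq_addr /=.
      have := LO_le_HI k s x l; lia.
    by rewrite lexx /= lez_nat LO_le_HI.
rewrite card_fseq undup_id.
  rewrite size_allpairs_dep sumnE big_map.
  rewrite -(big_mkord xpredT (fun x => (HI k s x l - LO k s x l).+1)) /index_iota subn0.
  by apply: eq_bigr => x _; rewrite size_iota.
apply: allpairs_uniq_dep; first exact: iota_uniq.
  by move=> x _; rewrite iota_uniq.
move=> [x j] [x' j'] _ _ /= [ex ej].
move: ej; rewrite ex => /addnI ->; by [].
Qed.

Lemma enc_area d k s : lateral_area (enc d k s) =
  (\sum_(l < d.-1) \sum_(x < k) (HI k s x l - LO k s x l).+1)%N.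
Proof. by rewrite /lateral_area; apply: eq_bigr => l _; rewrite enc_area_l. Qed.

End part_G5.

Section part_G6.

Lemma sumn_nth (s : seq nat) n : size s <= n -> sumn s = \sum_(i < n) nth 0 s i.
Proof.
elim: s n => [|x s IH] n /=.
  by move=> _; rewrite big1 // => i _; rewrite nth_nil.
case: n => [|n] //; rewrite ltnS => h.
by rewrite big_ord_recl /= (IH n h).
Qed.

Lemma sum_blocks (f : nat -> nat) p w :
  \sum_(0 <= i < p * w) f i = \sum_(0 <= l < p) \sum_(0 <= j < w) f (l * w + j).
Proof.
elim: p => [|p IH]; first by rewrite mul0n !big_geq.
rewrite big_nat_recr //= -IH mulSnr (big_cat_nat _ (n := p * w)) //=; last by rewrite leq_addr.
congr (_ + _).
rewrite -{1}(add0n (p * w)) big_addn addKn.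
by apply: eq_bigr => j _; rewrite addnC.
Qed.

Lemma evens_odds (F : nat -> nat) k' :
  \sum_(x < k'.+1) (F x.*2 + (if x.+1 < k'.+1 then F x.*2.+1 else 0)) =
  \sum_(j < k'.*2.+1) F j.
Proof.
rewrite big_split /= [X in _ + X = _]big_ord_recr /= ltnn addn0.
rewrite (eq_bigr (fun i : 'I_k' => F i.*2.+1)); last by move=> i _; rewrite ltnS ltn_ord.
elim: k' => [|k' IH]; first by rewrite big_ord0 addn0 big_ord1 (big_ord1 _ F).
rewrite big_ord_recr [X in _ + X]big_ord_recr /= doubleS [RHS]big_ord_recr [in RHS]big_ord_recr /=.
rewrite -IH; lia.
Qed.

Lemma area_l k s l : 0 < k ->
  \sum_(x < k) (HI k s x l - LO k s x l).+1 = k + \sum_(0 <= j < wk k) G k s l j.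
Proof.
case: k => [|k'] // _.
rewrite big_mkord /wk doubleS /= -evens_odds.
rewrite (eq_bigr (fun x : 'I_k'.+1 => 1 + (G k'.+1 s l x.*2 + (if x.+1 < k'.+1 then G k'.+1 s l x.*2.+1 else 0)))).
  by rewrite big_split /= sum_nat_const card_ord muln1.
by move=> x _; rewrite /HI -!addnA addKn add1n.
Qed.

Lemma area_formula d k s : 0 < k -> size s <= d.-1 * wk k ->
  \sum_(l < d.-1) \sum_(x < k) (HI k s x l - LO k s x l).+1 = k * d.-1 + sumn s.
Proof.
move=> hk hs.
rewrite (eq_bigr (fun l : 'I_d.-1 => k + \sum_(0 <= j < wk k) G k s l j)); last by move=> l _; rewrite area_l.
rewrite big_split /= sum_nat_const card_ord mulnC; congr (_ + _).
rewrite (sumn_nth hs) -(big_mkord xpredT (fun i => nth 0 s i)) sum_blocks big_mkord.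
by [].
Qed.

End part_G6.

Section part_G7.
Local Open Scope ring_scope.

Lemma box_eq D (lo hi lo' hi' : {ffun 'I_D -> int}) :
  (forall i, lo i <= hi i) -> (forall i, lo' i <= hi' i) ->
  (forall y : {ffun 'I_D -> int}, [forall i, (lo i <= y i) && (y i <= hi i)] =
                                [forall i, (lo' i <= y i) && (y i <= hi' i)]) ->
  lo = lo' /\ hi = hi'.
Proof.
move=> h h' e.
have e1 := e lo; have e2 := e lo'; have e3 := e hi; have e4 := e hi'.
have t1 : [forall i, (lo i <= lo i) && (lo i <= hi i)] by apply/forallP => i; rewrite lexx h.
have t2 : [forall i, (lo' i <= lo' i) && (lo' i <= hi' i)] by apply/forallP => i; rewrite lexx h'.
have t3 : [forall i, (lo i <= hi i) && (hi i <= hi i)] by apply/forallP => i; rewrite lexx h.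
have t4 : [forall i, (lo' i <= hi' i) && (hi' i <= hi' i)] by apply/forallP => i; rewrite lexx h'.
rewrite t1 in e1; rewrite t2 in e2; rewrite t3 in e3; rewrite t4 in e4.
move/esym/forallP: e1 => e1; move/forallP: e2 => e2; move/esym/forallP: e3 => e3; move/forallP: e4 => e4.
split; apply/ffunP => i.
  have /andP [a1 _] := e1 i; have /andP [a2 _] := e2 i.
  by apply/eqP; rewrite eq_le a1 a2.
have /andP [_ a1] := e3 i; have /andP [_ a2] := e4 i.
by apply/eqP; rewrite eq_le a1 a2.
Qed.

Lemma enc_LOHI d k s s' x : (x < k)%N -> enc d k s = enc d k s' ->
  LOf d k s x = LOf d k s' x /\ HIf d k s x = HIf d k s' x.
Proof.
move=> hx e; apply: box_eq.
- by move=> i; rewrite /LOf /HIf !ffunE lez_nat LO_le_HI.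
- by move=> i; rewrite /LOf /HIf !ffunE lez_nat LO_le_HI.
move=> y.
have := congr1 (fun A => (Posz x, y) \in A) e; rewrite /= !enc_mem !inA_col // => E.
have L1 : forall t, [forall i, (LOf d k t x i <= y i) && (y i <= HIf d k t x i)] =
   [forall i : 'I_d.-1, ((LO k t x i)%:Z <= y i) && (y i <= (HI k t x i)%:Z)].
  by move=> t; apply: eq_forallb => i; rewrite /LOf /HIf !ffunE.
by rewrite !L1 E.
Qed.

Lemma G_from_LOHI k s l j : (0 < k)%N -> (j < wk k)%N ->
  G k s l j = if odd j then (HI k s j./2 l - LO k s j./2.+1 l)%N
              else if (j./2.+1 < k)%N then (LO k s j./2.+1 l - LO k s j./2 l)%N
                   else (HI k s j./2 l - LO k s j./2 l)%N.
Proof.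
move=> hk hj.
rewrite -{1}(odd_double_half j).
case ho: (odd j) => /=.
  have hx : (j./2.+1 < k)%N.
    move: hj; rewrite /wk -{1}(odd_double_half j) ho; lia.
  rewrite /HI hx LO_S add1n; lia.
case: ifP => hx.
  rewrite LO_S add0n; lia.
rewrite /HI hx add0n; lia.
Qed.

Lemma enc_inj d k s s' : (0 < k)%N -> size s = (d.-1 * wk k)%N -> size s' = (d.-1 * wk k)%N ->
  enc d k s = enc d k s' -> s = s'.
Proof.
move=> hk hs hs' e.
have hw : (0 < wk k)%N by rewrite /wk; lia.
apply: (@eq_from_nth _ 0%N); first by rewrite hs hs'.
move=> i; rewrite hs => hi.
have hl : (i %/ wk k < d.-1)%N by rewrite ltn_divLR.
have hj : (i %% wk k < wk k)%N by rewrite ltn_mod.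
rewrite (divn_eq i (wk k)).
have E : forall x, (x < k)%N -> LO k s x (Ordinal hl) = LO k s' x (Ordinal hl) /\
                                HI k s x (Ordinal hl) = HI k s' x (Ordinal hl).
  move=> x hx; have [e1 e2] := enc_LOHI hx e.
  move/ffunP: e1 => /(_ (Ordinal hl)); move/ffunP: e2 => /(_ (Ordinal hl)).
  by rewrite /LOf /HIf !ffunE => [[->] [->]].
have := G_from_LOHI s (i %/ wk k) hk hj; have := G_from_LOHI s' (i %/ wk k) hk hj.
rewrite /G => -> ->.
have hx0 : ((i %% wk k)./2 < k)%N by move: hj; rewrite /wk; lia.
case: (E _ hx0) => /= -> ->.
case: ifP => ho.
  case: (boolP ((i %% wk k)./2.+1 < k)%N) => hx1; first by case: (E _ hx1) => /= -> _.
  by move: hj; rewrite /wk -(odd_double_half (i %% wk k)) ho; lia.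
case: ifP => // hx1; by case: (E _ hx1) => /= -> _.
Qed.

End part_G7.

Section part_G8.
Local Open Scope ring_scope.

Lemma build d k (lo hi : nat -> {ffun 'I_d.-1 -> int}) : (0 < k)%N ->
  (forall x i, (x < k)%N -> 0 <= lo x i <= hi x i) ->
  (forall i, lo 0%N i = 0) ->
  (forall x i, (x.+1 < k)%N -> lo x i <= lo x.+1 i <= hi x i) ->
  exists s, size s = (d.-1 * wk k)%N /\
     forall x, (x < k)%N -> LOf d k s x = lo x /\ HIf d k s x = hi x.
Proof.
move=> hk h1 h2 h3.
pose L x l : nat := if insub l is Some o then `|lo x o|%N else 0%N.
pose H x l : nat := if insub l is Some o then `|hi x o|%N else 0%N.
have LE : forall x (o : 'I_d.-1), L x o = `|lo x o|%N by move=> x o; rewrite /L valK.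
have HE : forall x (o : 'I_d.-1), H x o = `|hi x o|%N by move=> x o; rewrite /H valK.
pose E l j : nat := if odd j then (H j./2 l - L j./2.+1 l)%N
                    else if (j./2.+1 < k)%N then (L j./2.+1 l - L j./2 l)%N
                    else (H j./2 l - L j./2 l)%N.
pose w := wk k.
have hw : (0 < w)%N by rewrite /w /wk; lia.
exists (mkseq (fun i => E (i %/ w)%N (i %% w)%N) (d.-1 * w)); split; first by rewrite size_mkseq.
have hG : forall (o : 'I_d.-1) j, (j < w)%N -> G k (mkseq (fun i => E (i %/ w)%N (i %% w)%N) (d.-1 * w)) o j = E o j.
  move=> o j hj; rewrite /G nth_mkseq; last first.
    have := ltn_ord o; rewrite -/w; nia.
  rewrite -/w divnMDl // divn_small // addn0 modnMDl modn_small //.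
set s := mkseq _ _.
have hLO : forall x (o : 'I_d.-1), (x < k)%N -> LO k s x o = L x o.
  elim=> [|x IH] o hx; first by rewrite LO0 LE h2.
  rewrite LO_S IH; last by lia.
  rewrite hG; last by rewrite /w /wk; lia.
  rewrite /E odd_double doubleK hx !LE.
  have := h3 x o hx; have := h1 x o (ltnW hx).
  move=> /andP [a1 a2] /andP [a3 a4].
  have b1 : (`|lo x o| <= `|lo x.+1 o|)%N by rewrite -lez_nat !gez0_abs //; apply: le_trans a3.
  lia.
move=> x hx; split; apply/ffunP => o; rewrite /LOf /HIf ffunE.
  by rewrite hLO // LE gez0_abs //; have /andP [] := h1 x o hx.
rewrite /HI hLO // hG; last by rewrite /w /wk; lia.
rewrite /E odd_double doubleK.
have /andP [a1 a2] := h1 x o hx.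
case: ifP => hx1.
  rewrite hG; last by rewrite /w /wk; lia.
  rewrite /E /= odd_double /= uphalf_double !LE HE.
  have /andP [a3 a4] := h3 x o hx1.
  have b1 : (`|lo x o| <= `|lo x.+1 o|)%N by rewrite -lez_nat !gez0_abs //; apply: le_trans a3.
  have c1 : 0 <= lo x.+1 o by apply: le_trans a3.
  have c2 : 0 <= hi x o by apply: le_trans a2.
  have b2 : (`|lo x.+1 o| <= `|hi x o|)%N by rewrite -lez_nat !gez0_abs.
  have -> : (`|lo x o| + (`|lo x.+1 o| - `|lo x o|) + (`|hi x o| - `|lo x.+1 o|))%N = `|hi x o|%N by lia.
  by rewrite gez0_abs //; apply: le_trans a2.
rewrite LE HE.
have b1 : (`|lo x o| <= `|hi x o|)%N by rewrite -lez_nat !gez0_abs //; apply: le_trans a2.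
have -> : (`|lo x o| + (`|hi x o| - `|lo x o|) + 0)%N = `|hi x o|%N by lia.
by rewrite gez0_abs //; apply: le_trans a2.
Qed.

End part_G8.

Section part_G9.
Local Open Scope ring_scope.

Lemma structure d k n (A : {fset cell d}) : (0 < k)%N -> dpp k n A ->
  exists lo hi : nat -> {ffun 'I_d.-1 -> int},
   [/\ (forall x i, (x < k)%N -> 0 <= lo x i <= hi x i),
       (forall i, lo 0%N i = 0),
       (forall x i, (x.+1 < k)%N -> lo x i <= lo x.+1 i <= hi x i) &
       (forall c, (c \in A) = [&& 0 <= c.1, (`|c.1| < k)%N &
            [forall i : 'I_d.-1, (lo `|c.1|%N i <= c.2 i) && (c.2 i <= hi `|c.1|%N i)]])].
Proof.
case: k => [|k'] // _.
move=> [[hnn [[c0 hc0 e0] hzero]] _ [r hr hreach] hpl [hw _]].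
have hr1 : r.1 = 0.
  have [le1 _] := reach_le (hreach c0 hc0); have [h _] := hnn r hr.
  by apply/eqP; rewrite eq_le h -e0 le1.
have hr2 : forall i, r.2 i = 0.
  move=> i; have [c hc ec] := hzero i.
  have [_ le2] := reach_le (hreach c hc); have [_ h] := hnn r hr.
  by apply/eqP; rewrite eq_le h -ec le2.
set X := [fset c.1 | c : cell d in A]%fset.
have hX : #|` X|%fset = k'.+1 by [].
have down : forall x, Posz x.+1 \in X -> Posz x \in X.
  move=> x /imfsetP [c /= hc ec].
  have hne : c.1 != r.1 by rewrite -ec hr1.
  have [y' [_ [hy' _]]] := reach_entry (hreach c hc) hne.
  apply/imfsetP; exists (c.1 - 1, y') => //=.
  by rewrite -ec -addn1 PoszD addrK.
have down_all : forall x x', (x' <= x)%N -> Posz x \in X -> Posz x' \in X.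
  elim=> [|x IH] x' hx' hx; first by move: hx'; rewrite leqn0 => /eqP ->.
  case: (ltngtP x' x.+1) hx' => // [hlt _ | -> _ //].
  by apply: IH; [rewrite -ltnS | exact: down].
have colk : forall x, (Posz x \in X) = (x < k'.+1)%N.
  move=> x; apply/idP/idP.
    move=> hx; rewrite ltnNge; apply/negP => hkx.
    have : (#|` [fset z in map Posz (iota 0 x.+1)]| <= #|` X|)%N%fset.
      apply: fsubset_leq_card; apply/fsubsetP => z; rewrite in_fset => /mapP [x' hx' ->].
      by apply: (down_all x) => //; move: hx'; rewrite mem_iota; lia.
    rewrite card_fseq undup_id ?size_map ?size_iota ?hX; first lia.
    by rewrite map_inj_uniq ?iota_uniq // => ? ? [].
  move=> hx; apply/negPn/negP => hnx.
  have : (#|` X| <= #|` [fset z in map Posz (iota 0 x)]|)%N%fset.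
    apply: fsubset_leq_card; apply/fsubsetP => z /imfsetP [c /= hc ->].
    rewrite in_fset; have [h0 _] := hnn c hc.
    apply/mapP; exists `|c.1|%N; last by rewrite gez0_abs.
    rewrite mem_iota add0n /=; rewrite ltnNge; apply/negP => hle.
    move/negP: hnx; apply; apply: (down_all `|c.1|%N) => //.
    by apply/imfsetP; exists c; rewrite ?gez0_abs.
  rewrite card_fseq undup_id ?size_map ?size_iota ?hX; first lia.
  by rewrite map_inj_uniq ?iota_uniq // => ? ? [].
have boxes : forall o : 'I_k'.+1, exists lh : {ffun 'I_d.-1 -> int} * {ffun 'I_d.-1 -> int},
    (forall y, ((Posz o, y) \in A) = [forall i, (lh.1 i <= y i) && (y i <= lh.2 i)]) /\
    (forall i, lh.1 i <= lh.2 i).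
  move=> o; have : Posz o \in X by rewrite colk.
  move=> /imfsetP [c /= hc ec].
  have [lo [hi eq]] := hpl c hc.
  exists (lo, hi); split; first by move=> y; rewrite ec eq.
  move=> i; have := eq c.2; rewrite -surjective_pairing hc => /esym/forallP/(_ i) /andP [a b].
  exact: le_trans a b.
have [f hf] := fin_all_exists boxes.
exists (fun x => (f (inord x)).1), (fun x => (f (inord x)).2).
have hbox : forall x, (x < k'.+1)%N -> forall y, ((Posz x, y) \in A) =
    [forall i, ((f (inord x)).1 i <= y i) && (y i <= (f (inord x)).2 i)].
  move=> x hx y; have [e _] := hf (inord x); by rewrite -e inordK.
have hle : forall x i, ((f (inord x)).1 i <= (f (inord x)).2 i).
  by move=> x i; have [_ h] := hf (inord x); apply: h.
have h1 : forall x i, (x < k'.+1)%N -> 0 <= (f (inord x)).1 i <= (f (inord x)).2 i.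
  move=> x i hx; rewrite hle andbT.
  have hin : (Posz x, (f (inord x)).1) \in A.
    by rewrite hbox //; apply/forallP => j; rewrite lexx hle.
  by have [_ h] := hnn _ hin; apply: h.
split => //.
- move=> i; have := h1 0%N i (ltn0Sn _) => /andP [a _].
  have hin : (Posz 0, r.2) \in A.
    have -> : Posz 0 = r.1 by rewrite hr1.
    by move: hr; case: (r).
  move: hin; rewrite hbox // => /forallP /(_ i) /andP [b _].
  by apply/eqP; rewrite eq_le a -(hr2 i) b.
- move=> x i hx.
  have hb : (Posz x.+1, (f (inord x.+1)).1) \in A.
    by rewrite hbox //; apply/forallP => j; rewrite lexx hle.
  have hne : (Posz x.+1, (f (inord x.+1)).1).1 != r.1 by rewrite hr1.
  have [y' [hy1 [hy2 hy3]]] := reach_entry (hreach _ hb) hne.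
  move: hy2; rewrite /= -addn1 PoszD addrK hbox; last by lia.
  move=> /forallP /(_ i) /andP [a1 a2].
  move: hy3; rewrite /= hbox // => /forallP /(_ i) /andP [a3 a4].
  have := hy1 i; rewrite /= => a5.
  rewrite addn1; apply/andP; split; [exact: le_trans a1 a5 | exact: le_trans a3 a2].
- move=> [c1 c2] /=; apply/idP/idP.
    move=> hc; have [h0 _] := hnn _ hc.
    have hx : (`|c1| < k'.+1)%N.
      by rewrite -colk; apply/imfsetP; exists (c1, c2); rewrite //= gez0_abs.
    by rewrite h0 hx /= -hbox // gez0_abs.
  move=> /and3P [h0 hx hb]; have -> : c1 = Posz `|c1| by rewrite gez0_abs.
  by rewrite hbox.
Qed.

End part_G9.


Lemma decode d k n (A : {fset cell d}) : 0 < k -> dpp k n A ->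
  exists s, size s = d.-1 * wk k /\ enc d k s = A.
Proof.
move=> hk hA.
have [lo [hi [h1 h2 h3 h4]]] := structure hk hA.
have [s [hs hlh]] := build hk h1 h2 h3.
exists s; split => //.
apply/fsetP => c; rewrite enc_mem h4 /inA.
case: (boolP (`|c.1| < k)) => hx; last by rewrite !andbF.
have [e1 e2] := hlh _ hx.
do 2 congr (_ && _); apply: eq_forallb => i.
by rewrite -e1 -e2 /LOf /HIf !ffunE.
Qed.

Lemma enc_dpp d k s : 0 < k -> size s = d.-1 * wk k ->
  dpp k (k * d.-1 + sumn s) (enc d k s).
Proof.
move=> hk hs; split.
- exact: enc_normalized.
- exact/directed_poly/enc_directed.
- exact: enc_directed.
- exact: enc_plateau.
- split; first exact: enc_width.
  by rewrite enc_area area_formula // hs.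
Qed.

Theorem proposition1 (d k : nat) (hd : (3 <= d)%N) (hk : (1 <= k)%N) :
  exists p : nat -> nat,
    counts d k p /\ p 0 = 0%N /\
    gf_eq p (k * (d - 1)) (2 * k * (d - 1) - (d - 1)).
Proof.
have hm : 2 * k * (d - 1) - (d - 1) = d.-1 * wk k.
  rewrite /wk subn1; case: k hk => [|k'] // _; rewrite doubleS /=.
  nia.
exists (pf (k * (d - 1)) (2 * k * (d - 1) - (d - 1))); split; last split.
- move=> n; rewrite hm.
  exists (if k * (d - 1) <= n then map (enc d k) (comps (d.-1 * wk k) (n - k * (d - 1))) else [::]).
  split.
  + case: ifP => // _; rewrite map_inj_in_uniq ?comps_uniq //.
    move=> t t' ht ht'; apply: enc_inj => //.
      by move: ht; rewrite comps_mem => /andP [/eqP].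
    by move: ht'; rewrite comps_mem => /andP [/eqP].
  + move=> A; split.
      case: ifP => // han /mapP [t ht ->].
      move: ht; rewrite comps_mem => /andP [/eqP hs /eqP hsum].
      have := enc_dpp hk hs; rewrite hsum subn1.
      by have -> : (k * d.-1 + (n - k * d.-1) = n)%N by move: han; rewrite subn1; lia.
    move=> hA; have [t [hs he]] := decode hk hA.
    have := enc_dpp hk hs; rewrite he => hA'.
    have [_ _ _ _ [_ e1]] := hA; have [_ _ _ _ [_ e2]] := hA'.
    rewrite e1 in e2; rewrite subn1 e2 leq_addr; apply/mapP; exists t => //.
    by rewrite comps_mem hs eqxx /= addKn.
  + rewrite /pf; case: ifP => _ //; by rewrite size_map.
- rewrite /pf; case: ifP => // h; exfalso; move: h; rewrite leqn0 muln_eq0; lia.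
- exact: gf_pf.
Qed.
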